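(* Let $d\ge2$ and let $v=(v_1,\dots,v_d)\in\mathbb{R}^d$ satisfy $\sum_j v_j=1$ and $\sum_j v_j^2=d$. Then $\|v\|_1=\sum_j|v_j|\le d$ if $d$ is odd and $\|v\|_1\le\sqrt{d^2-1}$ if $d$ is even. When $d$ is odd, equality holds if and only if $v$ has $(d+1)/2$ components equal to $1$ and $(d-1)/2$ components equal to $-1$. When $d$ is even, equality holds if and only if $v$ has $d/2$ components equal to $(1+\sqrt{d^2-1})/d$ and $d/2$ components equal to $(1-\sqrt{d^2-1})/d$. *)

(* Defs.v *)
From mathcomp Require Import all_boot all_order all_algebra.
Set Implicit Arguments. Unset Strict Implicit. Unset Printing Implicit Defensive.
Import Order.TTheory GRing.Theory Num.Theory.
Local Open Scope ring_scope.

Definition norm1 (R : numDomainType) (d : nat) (v : 'I_d -> R) : R :=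
  \sum_(j < d) `|v j|.

Definition ncomp (R : numDomainType) (d : nat) (v : 'I_d -> R) (a : R) : nat :=
  #|[set j : 'I_d | v j == a]|.

(* Main.v *)
Require Import Defs.
From mathcomp Require Import all_boot all_order all_algebra ring lra zify.
Import Order.TTheory GRing.Theory Num.Theory.
Set Implicit Arguments. Unset Strict Implicit.
Local Open Scope ring_scope.

Definition eps (R : numDomainType) (d : nat) (v : 'I_d -> R) j : R :=
  if 0 <= v j then 1 else -1.

Lemma sq_id (R : realDomainType) (d : nat) (v : 'I_d -> R) (g e : R) :
  \sum_(j < d) v j = 1 -> \sum_(j < d) v j ^+ 2 = d%:R ->
  \sum_(j < d) (v j - g - e * eps v j) ^+ 2 =
  d%:R - 2 * g + d%:R * g ^+ 2 + d%:R * e ^+ 2 - 2 * e * norm1 v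
   + 2 * g * e * (\sum_(j < d) eps v j).
Proof.
move=> H1 H2.
transitivity (\sum_(j < d) (v j ^+ 2 - (2 * g) * v j - (2 * e) * `|v j|
   + (g ^+ 2 + e ^+ 2) + (2 * g * e) * eps v j)).
  apply: eq_bigr => j _; rewrite /eps; case: ifP => h.
    rewrite ger0_norm //; ring.
  rewrite ltr0_norm ?ltNge ?h //; ring.
rewrite !big_split /= !sumrN !sumr_const card_ord -!mulr_sumr H1 H2 /norm1.
ring.
Qed.

Lemma sum_eps (R : realDomainType) (d : nat) (v : 'I_d -> R) :
  \sum_(j < d) eps v j = #|[set j | 0 <= v j]|%:R - #|~: [set j | 0 <= v j]|%:R.
Proof.
rewrite (bigID (fun j => j \in [set j | 0 <= v j])) /=.
rewrite (eq_bigr (fun _ => 1)); last by move=> j; rewrite inE /eps => ->.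
rewrite [X in _ + X](eq_bigr (fun _ => -1)); last by move=> j; rewrite inE /eps => /negbTE ->.
rewrite sumr_const.
rewrite (eq_bigl (fun j => j \in ~: [set j | 0 <= v j])); last by move=> j; rewrite !inE.
by rewrite sumr_const mulNrn.
Qed.

Lemma sqsum_ge0 (R : realDomainType) (d : nat) (F : 'I_d -> R) :
  0 <= \sum_(j < d) F j ^+ 2.
Proof. by apply: sumr_ge0 => j _; apply: sqr_ge0. Qed.

Lemma sqsum_eq0 (R : realDomainType) (d : nat) (F : 'I_d -> R) :
  \sum_(j < d) F j ^+ 2 = 0 -> forall j, F j = 0.
Proof.
move=> H j; have := @psumr_eq0P R _ predT (fun j => F j ^+ 2).
move=> /(_ (fun j _ => sqr_ge0 (F j)) H j isT) /eqP.
by rewrite sqrf_eq0 => /eqP.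
Qed.

Lemma cover (R : numDomainType) (d : nat) (v : 'I_d -> R) (x y : R) :
  x != y -> (ncomp v x + ncomp v y)%N = d -> forall j, v j = x \/ v j = y.
Proof.
move=> xy H j.
set A := [set j | v j == x]; set B := [set j | v j == y].
have AB0 : A :&: B = set0.
  apply/setP => k; rewrite !inE; apply/negbTE; apply/andP => [[/eqP -> /eqP]].
  by move/eqP: xy.
have : A :|: B = setT.
  have hU : #|A :|: B| = (#|A| + #|B|)%N by rewrite -cardsUI AB0 cards0 addn0.
  apply/eqP; rewrite eqEcard subsetT cardsT card_ord hU.
  by move: H; rewrite /ncomp => H; rewrite /= eq_leq // H.
move/setP/(_ j); rewrite !inE => /orP [/eqP|/eqP]; auto.
Qed.

Lemma count2 (R : numDomainType) (d : nat) (v : 'I_d -> R) (x y : R)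
  (F : R -> R) : x != y -> (forall j, v j = x \/ v j = y) ->
  \sum_(j < d) F (v j) = F x *+ ncomp v x + F y *+ ncomp v y.
Proof.
move=> xy hv.
rewrite (bigID (fun j => j \in [set j | v j == x])) /=.
rewrite (eq_bigr (fun _ => F x)); last by move=> j; rewrite inE => /eqP ->.
rewrite sumr_const.
rewrite (eq_bigl (fun j => j \in [set j | v j == y])); last first.
  move=> j; rewrite !inE; case: (hv j) => ->; first by rewrite eqxx (negbTE xy).
  by rewrite eqxx eq_sym (negbTE xy).
rewrite (eq_bigr (fun _ => F y)); last by move=> j; rewrite inE => /eqP ->.
by rewrite sumr_const.
Qed.

Lemma odd_part (R : rcfType) (d : nat) (v : 'I_d -> R) :
  \sum_(j < d) v j = 1 ->
  \sum_(j < d) v j ^+ 2 = d%:R ->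
  odd d ->
     norm1 v <= d%:R /\
     (norm1 v = d%:R <->
        (ncomp v 1 = d.+1./2 /\ ncomp v (-1) = d.-1./2)%N).
Proof.
move=> H1 H2 dodd.
have E := sq_id 0 1 H1 H2.
have G := sqsum_ge0 (fun j => v j - 0 - 1 * eps v j).
have E' : \sum_(j < d) (v j - 0 - 1 * eps v j) ^+ 2 = 2 * (d%:R - norm1 v).
  by rewrite E; ring.
rewrite E' in G.
have n1 : (-1 : R) != 1 by rewrite lt_eqF // -subr_gt0 opprK; lra.
split; first by lra.
split.
- move=> HL.
  have Z : \sum_(j < d) (v j - 0 - 1 * eps v j) ^+ 2 = 0 by rewrite E' HL subrr mulr0.
  have key j : v j = eps v j.
    by have := sqsum_eq0 Z j; rewrite subr0 mul1r => /eqP; rewrite subr_eq0 => /eqP.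
  set S := [set j | 0 <= v j].
  have hS1 : [set j | v j == 1] = S.
    apply/setP => j; rewrite !inE; move: (key j); rewrite /eps.
    case: ifP => h ->; first by rewrite eqxx.
    by rewrite (negbTE n1).
  have hS2 : [set j | v j == -1] = ~: S.
    apply/setP => j; rewrite !inE; move: (key j); rewrite /eps.
    case: ifP => h ->; first by rewrite eq_sym (negbTE n1).
    by rewrite eqxx.
  have ab : (#|S| + #|~: S|)%N = d by rewrite cardsC card_ord.
  have ht : \sum_(j < d) v j = #|S|%:R - #|~: S|%:R.
    by rewrite (eq_bigr _ (fun j _ => key j)) sum_eps.
  have hab : #|S| = (#|~: S|).+1.
    apply/eqP; rewrite -(eqr_nat R) -addn1 natrD; apply/eqP; lra.
  rewrite /ncomp hS1 hS2; split; lia.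
- move=> [c1 c2].
  have hc : (ncomp v 1 + ncomp v (-1))%N = d by rewrite c1 c2; lia.
  have n1' : (1 : R) != -1 by rewrite eq_sym.
  have cv := cover n1' hc.
  rewrite /norm1 (count2 (fun x => `|x|) n1' cv) normrN normr1 -mulrnDr hc.
  done.
Qed.

Lemma half_double (R : rcfType) (d : nat) : ~~ odd d -> (d%:R : R) = (d./2)%:R * 2.
Proof.
move=> h; have hdn : (d./2 * 2)%N = d by lia.
by rewrite -[X in X%:R = _]hdn natrM.
Qed.

Lemma even_back (R : rcfType) (d : nat) (v : 'I_d -> R) :
  (2 <= d)%N -> ~~ odd d ->
  (ncomp v ((1 + Num.sqrt (d%:R ^+ 2 - 1)) / d%:R) = d./2 /\
   ncomp v ((1 - Num.sqrt (d%:R ^+ 2 - 1)) / d%:R) = d./2)%N ->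
  norm1 v = Num.sqrt (d%:R ^+ 2 - 1).
Proof.
move=> d2 deven [c1 c2].
have D2 : (2:R) <= d%:R by rewrite ler_nat.
set D : R := d%:R in D2 c1 c2 *.
set r := Num.sqrt (D ^+ 2 - 1) in c1 c2 *.
have hr2 : r ^+ 2 = D ^+ 2 - 1 by rewrite sqr_sqrtr //; nra.
have hr0 : 0 <= r := sqrtr_ge0 _.
have hr1 : 1 < r by nra.
have Dp : 0 < D by lra.
have D0 : D != 0 by rewrite gt_eqF.
have ap : 0 < (1 + r) / D by rewrite divr_gt0 //; lra.
have bn : (1 - r) / D < 0 by rewrite pmulr_llt0 ?invr_gt0 //; lra.
have ab : (1 + r) / D != (1 - r) / D by rewrite gt_eqF // (lt_trans bn ap).
have hc : (ncomp v ((1 + r) / D) + ncomp v ((1 - r) / D))%N = d by rewrite c1 c2; lia.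
have cv := cover ab hc.
rewrite /norm1 (count2 (fun x => `|x|) ab cv) /= c1 c2.
rewrite gtr0_norm // ltr0_norm //.
have hd : (d./2)%:R = D / 2.
  by rewrite /D (half_double R deven); field.
by rewrite -mulrnDl -mulr_natr hd; field.
Qed.

Lemma parity (a b d : nat) : (a + b)%N = d -> ~~ odd d -> (a <= b)%N \/ (b.+2 <= a)%N.
Proof. move=> h1 h2; lia. Qed.

Lemma rfacts (R : rcfType) (D : R) : 2 <= D ->
  let r := Num.sqrt (D ^+ 2 - 1) in
  r ^+ 2 = D ^+ 2 - 1 /\ 0 <= r /\ 3/2 < r /\ r < D.
Proof.
move=> D2 r.
have hr2 : r ^+ 2 = D ^+ 2 - 1 by rewrite sqr_sqrtr //; nra.
have hr0 : 0 <= r := sqrtr_ge0 _.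
split=> //; split=> //; split; nra.
Qed.

Lemma half_eq (a b d : nat) : (a + b)%N = d -> a = b -> (a = d./2 /\ b = d./2)%N.
Proof. move=> h1 h2; split; lia. Qed.

Lemma even_fwd (R : rcfType) (d : nat) (v : 'I_d -> R) :
  (2 <= d)%N ->
  \sum_(j < d) v j = 1 ->
  \sum_(j < d) v j ^+ 2 = d%:R ->
  ~~ odd d ->
     norm1 v <= Num.sqrt (d%:R ^+ 2 - 1) /\
     (norm1 v = Num.sqrt (d%:R ^+ 2 - 1) ->
        (ncomp v ((1 + Num.sqrt (d%:R ^+ 2 - 1)) / d%:R) = d./2 /\
         ncomp v ((1 - Num.sqrt (d%:R ^+ 2 - 1)) / d%:R) = d./2)%N).
Proof.
move=> d2 H1 H2 deven.
have Gen g e := sq_id g e H1 H2.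
have D2 : (2:R) <= d%:R by rewrite ler_nat.
set D : R := d%:R in D2 Gen H2 *.
have [hr2 [hr0 [hr1 hrD]]] := rfacts D2.
set r := Num.sqrt (D ^+ 2 - 1) in hr2 hr0 hr1 hrD *.
have Dp : 0 < D by lra.
have D0 : D != 0 by rewrite gt_eqF.
set S := [set j | 0 <= v j].
have ab : (#|S| + #|~: S|)%N = d by rewrite cardsC card_ord.
have ht := sum_eps v.
rewrite -/S in ht.
set t := (#|S|%:R - #|~: S|%:R : R) in ht.
set L := norm1 v.
have hpar := parity ab deven.
case: hpar => hab.
-
  have tle : t <= 0 by rewrite /t subr_le0 ler_nat.
  have E := Gen (1 / D) (r / D).
  rewrite ht in E.
  have I1 : D - 2 * (1 / D) + D * (1 / D) ^+ 2 + D * (r / D) ^+ 2 - 2 * (r / D) * L +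
     2 * (1 / D) * (r / D) * t = (2 * r / D ^+ 2) * (D * (r - L) + t).
    have J : D - 2 * (1 / D) + D * (1 / D) ^+ 2 + D * (r / D) ^+ 2 - 2 * (r / D) * L +
     2 * (1 / D) * (r / D) * t = (2 * r / D ^+ 2) * (D * (r - L) + t)
      + D * (D ^+ 2 - 1 - r ^+ 2) / D ^+ 2 by field.
    by rewrite J hr2 subrr mulr0 mul0r addr0.
  rewrite I1 in E.
  have pos : 0 < 2 * r / D ^+ 2 by rewrite divr_gt0 ?exprn_gt0 //; lra.
  have G := sqsum_ge0 (fun j => v j - 1 / D - r / D * eps v j).
  rewrite E pmulr_rge0 // in G.
  have rL : 0 <= r - L by rewrite -(pmulr_rge0 _ Dp); lra.
  split; first by lra.
  move=> HL.
  have t0 : t = 0 by rewrite HL subrr mulr0 add0r in G; lra.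
  have Z : \sum_(j < d) (v j - 1 / D - r / D * eps v j) ^+ 2 = 0.
    by rewrite E HL subrr mulr0 add0r t0 mulr0.
  have key j : v j = 1 / D + r / D * eps v j.
    by have := sqsum_eq0 Z j => /eqP; rewrite subr_eq0 subr_eq addrC => /eqP.
  have al : (1 + r) / D = 1 / D + r / D * 1 by field.
  have be : (1 - r) / D = 1 / D + r / D * (-1) by field.
  have rD0 : r / D != 0 by rewrite mulf_neq0 ?invr_eq0 // gt_eqF //; lra.
  have n1 : (1 : R) != -1 by rewrite eq_sym lt_eqF // -subr_gt0 opprK; lra.
  have ne : 1 / D + r / D * 1 != 1 / D + r / D * (-1).
    by rewrite (inj_eq (addrI _)) (inj_eq (mulfI rD0)).
  have hS1 : [set j | v j == (1 + r) / D] = S.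
    apply/setP => j; rewrite !inE al; move: (key j); rewrite /eps.
    case: ifP => h ->; first by rewrite eqxx.
    by rewrite eq_sym (negbTE ne).
  have hS2 : [set j | v j == (1 - r) / D] = ~: S.
    apply/setP => j; rewrite !inE be; move: (key j); rewrite /eps.
    case: ifP => h ->; first by rewrite (negbTE ne).
    by rewrite eqxx.
  have hab' : #|S| = #|~: S|.
    apply/eqP; rewrite -(eqr_nat R); apply/eqP; move: t0; rewrite /t; lra.
  by rewrite /ncomp hS1 hS2; apply: half_eq.
-
  have t2 : 2 <= t.
    rewrite /t; have : (#|~: S|.+2)%:R <= (#|S|%:R : R) by rewrite ler_nat.
    rewrite -addn2 natrD; lra.
  have tD : t <= D.
    have hD : D = #|S|%:R + #|~: S|%:R by rewrite /D -natrD ab.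
    have := ler0n R #|~: S|; rewrite /t; lra.
  have Q e : 0 <= D ^+ 2 - 1 + 2 * e * (t - D * L) + e ^+ 2 * (D ^+ 2 - t ^+ 2).
    have G := sqsum_ge0 (fun j => v j - (1 - e * t) / D - e * eps v j).
    rewrite Gen ht in G.
    have I : D - 2 * ((1 - e * t) / D) + D * ((1 - e * t) / D) ^+ 2 + D * e ^+ 2 -
      2 * e * L + 2 * ((1 - e * t) / D) * e * t =
      (D ^+ 2 - 1 + 2 * e * (t - D * L) + e ^+ 2 * (D ^+ 2 - t ^+ 2)) / D by field.
    by rewrite I pmulr_lge0 ?invr_gt0 in G.
  suff rL : L < r by split; [exact: ltW | move=> h; rewrite h ltxx in rL].
  rewrite ltNge; apply/negP => rL.
  have DL : D * r <= D * L by rewrite ler_pM2l.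
  case: (ltP t D) => tD'.
  + set K := D ^+ 2 - t ^+ 2.
    have Kp : 0 < K by rewrite /K subr_gt0; nra.
    set m := D * r - t.
    have m0 : 0 <= m by rewrite /m; nra.
    have Qm := Q (m / K).
    have I : (D ^+ 2 - 1 + 2 * (m / K) * (t - D * L) + (m / K) ^+ 2 * K) * K =
       (D ^+ 2 - 1) * K + 2 * m * (t - D * L) + m ^+ 2.
      by field; rewrite gt_eqF.
    have Qm' : 0 <= (D ^+ 2 - 1) * K + 2 * m * (t - D * L) + m ^+ 2.
      by rewrite -I; apply: mulr_ge0 => //; lra.
    have h1 : 0 <= m * (D * L - D * r) by apply: mulr_ge0 => //; lra.
    have h3 : 2 * m * (t - D * L) = - 2 * m ^+ 2 - 2 * m * (D * L - D * r).
      by rewrite /m; ring.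
    have J : m ^+ 2 - (D ^+ 2 - 1) * K = D * t * (t * D - 2 * r).
      have J' : m ^+ 2 - (D ^+ 2 - 1) * K = D * t * (t * D - 2 * r)
        + D ^+ 2 * (r ^+ 2 - (D ^+ 2 - 1)) by rewrite /m /K; ring.
      by rewrite J' hr2 subrr mulr0 addr0.
    have h2 : 0 < D * t * (t * D - 2 * r).
      have : 2 * D <= t * D by rewrite ler_pM2r.
      move=> h; rewrite !mulr_gt0 //; lra.
    lra.
  + have tE : t = D by lra.
    have QD := Q D.
    rewrite tE subrr mulr0 addr0 in QD.
    have : D ^+ 2 * (3 / 2) < D ^+ 2 * L by rewrite ltr_pM2l ?exprn_gt0 //; lra.
    move=> h; nra.
Qed.

Theorem lemmaS2 (R : rcfType) (d : nat) (v : 'I_d -> R) :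
  (2 <= d)%N ->
  \sum_(j < d) v j = 1 ->
  \sum_(j < d) v j ^+ 2 = d%:R ->
  (odd d ->
     norm1 v <= d%:R /\
     (norm1 v = d%:R <->
        (ncomp v 1 = d.+1./2 /\ ncomp v (-1) = d.-1./2)%N)) /\
  (~~ odd d ->
     norm1 v <= Num.sqrt (d%:R ^+ 2 - 1) /\
     (norm1 v = Num.sqrt (d%:R ^+ 2 - 1) <->
        (ncomp v ((1 + Num.sqrt (d%:R ^+ 2 - 1)) / d%:R) = d./2 /\
         ncomp v ((1 - Num.sqrt (d%:R ^+ 2 - 1)) / d%:R) = d./2)%N)).
Proof.
move=> d2 H1 H2; split.
- exact: odd_part.
- move=> deven; have [h1 h2] := even_fwd d2 H1 H2 deven.
  split => //; split => //; exact: even_back.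
Qed.
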